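(* In the even setting below, assume $N_k$ is invertible and let $c_k^0,\dots,c_k^{m-1}$ be the $n\times n$ blocks of the unique $mn\times n$ matrix $C_k=(c_k^0;\dots;c_k^{m-1})$ with $N_kC_k=F^{(k)}_{m}$. Then each $c_k^i$ is homogeneous (all entries being rational functions homogeneous of the same degree) with respect to the scaling $a_j^{2r+1}\mapsto\mu a_j^{2r+1}$, $a_j^{2r}\mapsto a_j^{2r}$, and $\deg c_k^{2\ell}=0$, $\deg c_k^{2\ell+1}=1$ for $\ell=0,\dots,s-1$.
   Context: Even setting: integers $n\ge1$, $s\ge 2$, $m=2s$. For each $k\in\mathbb Z$ let $a_k^0,\dots,a_k^{m-1}$ be $n\times n$ matrices with indeterminate entries, $N$-periodic in $k$. $Q_k$ is the $mn\times mn$ block matrix with $I_n$ in blocks $(i+1,i)$, last block column $(a_k^0;\dots;a_k^{m-1})$, $O_n$ elsewhere. $r_k=(O_n;a_k^1;O_n;a_k^3;\dots;O_n;a_k^{2s-1})$. $F^{(k)}_0=r_k$, $F^{(k)}_\ell=Q_k\cdots Q_{k+\ell-1}r_{k+\ell}$, $N_k=(F^{(k)}_0,\dots,F^{(k)}_{m-1})$. A rational function $f$ of the entries is homogeneous of degree $d$ if applying the scaling multiplies it by $\mu^d$ for all $\mu\ne0$. (The blocks $c_k^i$ are the coordinates of the map $\bar T(V_k)=(V_k,\dots,V_{k+m-1})r_k$ before normalization.) *)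

(* Defs.v *)
From HB Require Import structures.
From mathcomp Require Import all_boot all_order all_algebra.
Set Implicit Arguments. Unset Strict Implicit. Unset Printing Implicit Defensive.
Import Order.TTheory GRing.Theory Num.Theory.
Local Open Scope ring_scope.

Section EvenSetting.
Variables (K : fieldType) (n s : nat).
Notation m := (2 * s)%N.
(* the size mn, as a sum of m blocks of size n (block matrix convention) *)
Notation D := (\sum_(i < m) n)%N.

Variable a : int -> 'I_m -> 'M[K]_n.

Definition Qmat (k : int) : 'M[K]_D :=
  \mxblock_(i < m, j < m)
    (if (j : nat) == m.-1 then a k i
     else if (i : nat) == j.+1 then 1%:M else 0).

Definition rvec (k : int) : 'M[K]_(D, n) :=
  \mxcol_(i < m) (if odd i then a k i else 0).

Fixpoint Qprod (k : int) (l : nat) : 'M[K]_D :=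
  if l is l'.+1 then Qprod k l' *m Qmat (k + l'%:Z) else 1%:M.

Definition Fvec (k : int) (l : nat) : 'M[K]_(D, n) :=
  Qprod k l *m rvec (k + l%:Z).

Definition Nmat (k : int) : 'M[K]_D := \mxrow_(j < m) Fvec k j.

Definition Cmat (k : int) : 'M[K]_(D, n) := invmx (Nmat k) *m Fvec k m.

Definition cblk (k : int) (i : 'I_m) : 'M[K]_n := submxcol (Cmat k) i.
End EvenSetting.

Definition scale_odd (K : fieldType) (n s : nat) (mu : K)
  (a : int -> 'I_(2 * s) -> 'M[K]_n) : int -> 'I_(2 * s) -> 'M[K]_n :=
  fun k i => mu ^+ (odd i) *: a k i.

(* Main.v *)
Require Import Defs.
From HB Require Import structures.
From mathcomp Require Import all_boot all_order all_algebra.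
From mathcomp Require Import zify.
Set Implicit Arguments. Unset Strict Implicit. Unset Printing Implicit Defensive.
Import Order.TTheory GRing.Theory Num.Theory.
Local Open Scope ring_scope.

Section Aux.
Variables (K : fieldType) (n s : nat).
Notation m := (2 * s)%N.
Notation D := (\sum_(i < m) n)%N.
Variable a : int -> 'I_m -> 'M[K]_n.
Variable k : int.

Definition Eb (p : nat) : 'M[K]_(D, n) :=
  \mxcol_(j < m) (if (j : nat) == p then 1%:M else 0 : 'M[K]_n).

Lemma mxcolE_sum (B : 'I_m -> 'M[K]_n) :
  \mxcol_j B j = \sum_(i < m) Eb i *m B i.
Proof.
apply/mxcolP => j; rewrite mxcolK submxcol_sum.
under eq_bigr do rewrite -submxcol_mul mxcolK.
rewrite (bigD1 j) //= eqxx mul1mx big1 ?addr0 // => i ij.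
by rewrite ifF ?mul0mx //; apply/negbTE; rewrite eq_sym.
Qed.

Lemma Q_Elast t (hs : (0 < s)%N) :
  Qmat a t *m Eb m.-1 = \sum_(j < m) Eb j *m a t j.
Proof.
rewrite -mxcolE_sum /Qmat /Eb mul_mxblock_mxrow; apply: eq_mxcol => i.
have hm : (m.-1 < m)%N by rewrite prednK // muln_gt0.
rewrite (bigD1 (Ordinal hm)) //= eqxx mulmx1 big1 ?addr0 // => j jn.
have -> : ((j:nat) == m.-1) = false.
  by apply/negbTE; apply: contra jn => /eqP h; apply/eqP; apply: val_inj.
by rewrite mulmx0.
Qed.

Lemma Q_E t (i : nat) : (i.+1 < m)%N -> Qmat a t *m Eb i = Eb i.+1.
Proof.
move=> him; rewrite /Qmat /Eb mul_mxblock_mxrow; apply: eq_mxcol => r.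
have hi : (i < m)%N by apply: ltn_trans him.
rewrite (bigD1 (Ordinal hi)) //= eqxx mulmx1 big1 ?addr0.
  have -> : (i == m.-1) = false.
    by apply/negbTE; rewrite neq_ltn -ltnS prednK ?him // muln_gt0 /=; case: (s) him; rewrite ?muln0.
  done.
move=> j jn; have -> : ((j:nat) == i) = false.
  by apply/negbTE; apply: contra jn => /eqP h; apply/eqP; apply: val_inj.
by rewrite mulmx0.
Qed.

Definition Phi (p : nat) : 'M[K]_(D, n) :=
  Qprod a k (p.+1 - m) *m Eb (p - (p.+1 - m)).

Lemma L1 l i : (i < m)%N -> Qprod a k l *m Eb i = Phi (l + i).
Proof.
elim: l i => [|l IH] i him.
  rewrite /Phi add0n; have -> : (i.+1 - m = 0)%N by apply/eqP; rewrite subn_eq0.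
  by rewrite subn0.
rewrite /= -mulmxA; case: (ltnP i.+1 m) => h.
  by rewrite Q_E // IH // addSnnS.
rewrite /Phi.
have -> : ((l.+1 + i).+1 - m = l.+1)%N by lia.
have -> : (l.+1 + i - l.+1 = i)%N by lia.
by rewrite /= -mulmxA.
Qed.

Lemma Phi_small i : (i < m)%N -> Phi i = Eb i.
Proof. by move=> h; rewrite -[i]add0n -L1 //= mul1mx. Qed.

Lemma Phi_rec p : (0 < s)%N ->
  Phi (p + m) = \sum_(j < m) Phi (p + j) *m a (k + p%:Z) j.
Proof.
move=> hs; rewrite {1}/Phi.
have -> : ((p + m).+1 - m = p.+1)%N by lia.
have -> : (p + m - p.+1 = m.-1)%N by lia.
rewrite /= -mulmxA Q_Elast // mulmx_sumr; apply: eq_bigr => j _.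
by rewrite mulmxA L1.
Qed.

Lemma FvecO l : Fvec a k l =
  \sum_(j < m) Phi (l + j) *m (if odd j then a (k + l%:Z) j else 0).
Proof.
rewrite /Fvec /rvec mxcolE_sum mulmx_sumr; apply: eq_bigr => j _.
by rewrite mulmxA L1.
Qed.

Lemma FvecE l : (0 < s)%N -> Fvec a k l =
  Phi (l + m) - \sum_(j < m) Phi (l + j) *m (if ~~ odd j then a (k + l%:Z) j else 0).
Proof.
move=> hs; rewrite Phi_rec //; apply/eqP; rewrite eq_sym subr_eq FvecO -big_split.
apply/eqP; apply: eq_bigr => j _; case: (odd j) => /=.
  by rewrite mulmx0 addr0.
by rewrite mulmx0 add0r.
Qed.

Definition cO (l p : nat) : 'M[K]_n :=
  \sum_(j < m) (if odd j && (l + j == p)%N then a (k + l%:Z) j else 0).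
Definition cE (l p : nat) : 'M[K]_n :=
  (if (l + m == p)%N then 1%:M else 0) -
  \sum_(j < m) (if ~~ odd j && (l + j == p)%N then a (k + l%:Z) j else 0).
Definition Psi (o : nat) : 'M[K]_(D, D) := \mxrow_(u < m) Phi (2 * u + o).
Definition Sm (o : nat) : 'M[K]_D :=
  \mxblock_(u < m, l < m)
    (if odd (l + o) then cO l (2 * u + o) else cE l (2 * u + o)).
Definition bv : 'M[K]_(D, n) := \mxcol_(u < m) cO m (2 * u + 1).

Lemma sel (o p : nat) (X : 'M[K]_(D, n)) : (o <= 1)%N -> odd p = odd o ->
  (p < m + m)%N -> \sum_(u < m) (if (p == 2 * u + o)%N then X else 0) = X.
Proof.
move=> ho hp hpm.
have hd := odd_double_half p; rewrite -addnn hp in hd.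
have hu : (p./2 < m)%N by case: (o) ho hd => [|[|//]] _ /= hd; lia.
have e : p = (2 * (Ordinal hu) + o)%N by case: (o) ho hd => [|[|//]] _ /= hd; lia.
rewrite (bigD1 (Ordinal hu) (F := fun u : 'I_m => if p == (2 * u + o)%N then X else 0)) //=.
have -> : (p == 2 * Ordinal hu + o)%N by apply/eqP.
have -> : \sum_(u < m | u != Ordinal hu) (if p == (2 * u + o)%N then X else 0) = 0.
  2: by rewrite addr0.
apply: big1 => u hu'.
rewrite ifF //; apply/negbTE; apply: contra hu' => /eqP h.
by apply/eqP; apply: val_inj => /=; lia.
Qed.

Lemma selsum (c : 'I_m -> bool) (Y : 'I_m -> 'M[K]_n) (l o : nat) :
  (o <= 1)%N ->
  (forall j : 'I_m, c j -> odd (l + j) = odd o /\ (l + j < m + m)%N) ->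
  \sum_(u < m) Phi (2 * u + o) *m
     \sum_(j < m) (if c j && (l + j == 2 * u + o)%N then Y j else 0)
  = \sum_(j < m) Phi (l + j) *m (if c j then Y j else 0).
Proof.
move=> ho hc; set DD := (\sum_(i < m) n)%N.
under eq_bigr do rewrite mulmx_sumr.
rewrite exchange_big; apply: eq_bigr => j _ /=.
case cj: (c j) => /=; last by rewrite mulmx0 big1 // => u _; rewrite mulmx0.
have [h1 h2] := hc j cj.
rewrite -(sel (Phi (l + j) *m Y j) ho h1 h2).
by apply: eq_bigr => u _; case: eqP => [->|]; rewrite ?mulmx0.
Qed.

Lemma keyO l o : (o <= 1)%N -> odd (l + o) -> (l <= m)%N ->
  \sum_(u < m) Phi (2 * u + o) *m cO l (2 * u + o) =
  \sum_(j < m) Phi (l + j) *m (if odd j then a (k + l%:Z) j else 0).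
Proof.
move=> ho hlo hl; rewrite /cO; apply: selsum => // j hj; split; last first.
  by have := ltn_ord j; lia.
move: hlo; rewrite !oddD hj; by case: (odd l); case: (odd o).
Qed.

Lemma keyE l o : (o <= 1)%N -> ~~ odd (l + o) -> (l < m)%N ->
  \sum_(u < m) Phi (2 * u + o) *m cE l (2 * u + o) =
  Phi (l + m) -
  \sum_(j < m) Phi (l + j) *m (if ~~ odd j then a (k + l%:Z) j else 0).
Proof.
move=> ho hlo hl; set DD := (\sum_(i < m) n)%N.
rewrite /cE; under eq_bigr do rewrite mulmxBr; rewrite sumrB.
congr (_ - _); last first.
  apply: selsum => // j hj; split; last by have := ltn_ord j; lia.
  move: hlo; rewrite !oddD (negbTE hj); by case: (odd l); case: (odd o).
have hm : odd m = false by rewrite oddM.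
rewrite -(@sel o (l + m) (Phi (l + m)) ho); last by lia.
  apply: eq_bigr => u _; case: eqP => [<-|]; by rewrite ?mulmx1 ?mulmx0.
move: hlo; rewrite (oddD l o) (oddD l m) oddM /=; by case: (odd l); case: (odd o).
Qed.

Lemma NPsiS o : (o <= 1)%N -> (0 < s)%N -> Nmat a k = Psi o *m Sm o.
Proof.
move=> ho hs; rewrite /Nmat /Psi /Sm mul_mxrow_mxblock; apply: eq_mxrow => l.
case h: (odd (l + o)).
  by rewrite FvecO -(@keyO l o) // ltnW.
by rewrite FvecE // -(@keyE l o) ?h.
Qed.

Lemma FmPsib : Fvec a k m = Psi 1 *m bv.
Proof.
rewrite /Psi /bv mul_mxrow_mxcol FvecO (@keyO m 1) //.
by rewrite (oddD m 1) oddM.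
Qed.
End Aux.

Section Scale.
Variables (K : fieldType) (n s : nat).
Notation m := (2 * s)%N.
Notation D := (\sum_(i < m) n)%N.
Variable a : int -> 'I_m -> 'M[K]_n.
Variable k : int.
Variable mu : K.
Notation a' := (scale_odd mu a).

Lemma cO_scale l p : cO a' k l p = mu *: cO a k l p.
Proof.
rewrite /cO scaler_sumr; apply: eq_bigr => j _.
case: ifP => [/andP[h _]|]; last by rewrite scaler0.
by rewrite /scale_odd h expr1.
Qed.

Lemma cE_scale l p : cE a' k l p = cE a k l p.
Proof.
rewrite /cE; congr (_ - _); apply: eq_bigr => j _.
case: ifP => [/andP[/negbTE h _]|] //.
by rewrite /scale_odd h expr0 scale1r.
Qed.

Lemma bv_scale : bv a' k = mu *: bv a k.
Proof.
apply/mxcolP => u; rewrite mxcolK -mul_mx_scalar -submxcol_mul mxcolK.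
by rewrite cO_scale mul_mx_scalar.
Qed.

Lemma id_mxrow : (1%:M : 'M[K]_D) = \mxrow_(i < m) Eb K n s i.
Proof.
rewrite -(mxdiagZ (p_ := fun _ : 'I_m => n) 1) /mxdiag mxblockEh.
apply: eq_mxrow => i; apply: eq_mxcol => j.
by case: eqP => [->|ne]; rewrite ?conform_mx_id ?eqxx // ifF //;
  apply/negbTE/eqP => h; apply: ne; apply: val_inj.
Qed.

Lemma PsiEb o (u : nat) : (u < m)%N -> Psi a k o *m Eb K n s u = Phi a k (2 * u + o).
Proof.
move=> hu; set DD := D.
rewrite /Psi /Eb mul_mxrow_mxcol.
rewrite (bigD1 (Ordinal hu) (F := fun i : 'I_m => Phi a k (2 * i + o) *m
   (if (i : nat) == u then 1%:M else 0))) //= eqxx mulmx1.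
have -> : \sum_(i < m | i != Ordinal hu) Phi a k (2 * i + o) *m
   (if (i : nat) == u then 1%:M else 0) = 0.
  apply: big1 => i hi; rewrite ifF ?mulmx0 //; apply/negbTE.
  by apply: contra hi => /eqP h; apply/eqP; apply: val_inj.
by rewrite addr0.
Qed.
End Scale.

Theorem mainTheorem4 (K : fieldType) (n s N : nat)
  (hn : (1 <= n)%N) (hs : (2 <= s)%N) (hN : (0 < N)%N)
  (a : int -> 'I_(2 * s) -> 'M[K]_n)
  (hper : forall k : int, a (k + N%:Z) = a k)
  (k : int) (hNk : Nmat a k \in unitmx)
  (mu : K) (hmu : mu != 0) :
  Nmat (scale_odd mu a) k \in unitmx /\
  forall i : 'I_(2 * s),
    cblk (scale_odd mu a) k i = mu ^+ (odd i) *: cblk a k i.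
Proof.
have hs0 : (0 < s)%N by apply: leq_trans hs.
have hNo : forall o, (o <= 1)%N -> Nmat a k = Psi a k o *m Sm a k o.
  by move=> o ho; apply: NPsiS.
have hN' : forall o, (o <= 1)%N ->
    Nmat (scale_odd mu a) k = Psi (scale_odd mu a) k o *m Sm (scale_odd mu a) k o.
  by move=> o ho; apply: NPsiS.
have uS : forall o, (o <= 1)%N -> Sm a k o \in unitmx.
  by move=> o ho; move: hNk; rewrite (hNo o ho) unitmx_mul => /andP[].
have uP1 : Psi a k 1 \in unitmx.
  by move: hNk; rewrite (hNo 1%N isT) unitmx_mul => /andP[].
have uS' : forall o, (o <= 1)%N -> Sm (scale_odd mu a) k o \in unitmx.
  move=> o ho.
  have e : Sm (scale_odd mu a) k o *m
      \mxdiag_(l < 2 * s) (((if odd (l + o) then mu else 1)^-1)%:M : 'M[K]_n)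
      = Sm a k o.
    rewrite /Sm mul_mxblock_mxdiag; apply/eq_mxblockP => u l.
    rewrite mul_mx_scalar; case: ifP => _.
      by rewrite cO_scale scalerA mulVf // scale1r.
    by rewrite cE_scale invr1 scale1r.
  have := mulmxV (uS o ho); rewrite -{1}e -mulmxA => /mulmx1_unit [] //.
have uN' : Nmat (scale_odd mu a) k \in unitmx.
  have hP : forall o, (o <= 1)%N ->
      Psi (scale_odd mu a) k o = Nmat (scale_odd mu a) k *m invmx (Sm (scale_odd mu a) k o).
    by move=> o ho; rewrite (hN' o ho) mulmxK // uS'.
  have : Nmat (scale_odd mu a) k *m
      \mxrow_(i < 2 * s) (invmx (Sm (scale_odd mu a) k (odd i)) *m Eb K n s (i./2))
      = 1%:M.
    rewrite mul_mxrow id_mxrow; apply/eq_mxrowP => i.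
    have hi2 : (i./2 < 2 * s)%N by have := ltn_ord i; rewrite -{1}(odd_double_half i) -addnn; lia.
    rewrite mulmxA -hP ?leq_b1 // PsiEb //.
    have -> : (2 * i./2 + odd i = i)%N by have := odd_double_half i; rewrite -addnn; lia.
    by rewrite Phi_small.
  by case/mulmx1_unit.
split => //.
have hC : Sm a k 1 *m Cmat a k = bv a k.
  have : Nmat a k *m Cmat a k = Fvec a k (2 * s) by rewrite /Cmat mulKVmx.
  rewrite (hNo 1%N isT) FmPsib -mulmxA => /(congr1 (mulmx (invmx (Psi a k 1)))).
  by rewrite !mulKmx.
set X := \mxcol_(i < 2 * s) (mu ^+ odd i *: cblk a k i).
have hX : Cmat (scale_odd mu a) k = X.
  have e : Nmat (scale_odd mu a) k *m X = Fvec (scale_odd mu a) k (2 * s).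
    rewrite (hN' 1%N isT) FmPsib -mulmxA; congr (_ *m _).
    rewrite bv_scale -hC -(submxcolK (Cmat a k)) /Sm /X !mul_mxblock_mxrow.
    apply/mxcolP => u; rewrite -mul_mx_scalar -submxcol_mul !mxcolK mul_mx_scalar.
    rewrite scaler_sumr; apply: eq_bigr => l _.
    rewrite /cblk (oddD l 1) addbT; case: (odd l) => /=.
      by rewrite cE_scale expr1 -scalemxAr.
    by rewrite cO_scale expr0 scale1r -scalemxAl.
  by rewrite /Cmat -e mulKmx.
by move=> i; rewrite /cblk hX /X mxcolK.
Qed.
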